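(* Let $n\ge 3$ and let $\Delta=\Delta_{J(K_n)}$ be the simplicial complex on the vertex set $\{[ij]\mid 1\le i<j\le n\}$ (the edges of the complete graph $K_n$) whose Stanley–Reisner ideal is \[J(K_n)=\langle x_{ij}x_{kl},\ x_{ij}x_{ik}x_{jk}\mid i,j,k,l\text{ distinct}\rangle\subseteq \Bbbk[x_{ij}\mid 1\le i<j\le n].\] Then $\Delta$ consists of $n$ simplices of dimension $n-2$ (its facets), each meeting the others in $n-1$ vertices, and its face polynomial is \[f(\Delta,x)=x^{n-1}+n\Big((n-1)x^{n-2}+\binom{n-1}2x^{n-3}+\binom{n-1}3x^{n-4}+\cdots+(n-1)x+1\Big)-\binom n2x^{n-2}.\]
   Context: The Stanley–Reisner ideal of a simplicial complex $\Delta$ is generated by the monomials $\prod_{v\in\sigma}x_v$ for non-faces $\sigma$ of $\Delta$. For a simplicial complex $\Delta$ of dimension $\delta-1$ with $f_{i}$ faces of dimension $i$ ($f_{-1}=1$ for the empty face), the face polynomial is $f(\Delta,x)=\sum_{i=0}^{\delta}f_{i-1}x^{\delta-i}$. Here $x_{ji}:=x_{ij}$. *)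

(* Defs.v *)
From HB Require Import structures.
From mathcomp Require Import all_boot all_order all_algebra.
Set Implicit Arguments. Unset Strict Implicit. Unset Printing Implicit Defensive.
Import GRing.Theory.
Local Open Scope ring_scope.

(* Vertices: the edges [ij] of the complete graph K_n, i.e. 2-subsets of 'I_n. *)
Definition Kedge (n : nat) := {e : {set 'I_n} | #|e| == 2%N}.

(* The simplicial complex on V whose Stanley-Reisner ideal is generated by the
   squarefree monomials prod_{v in g} x_v, g in gens: a set sigma is a face
   iff the monomial x^sigma is not in the ideal, i.e. no generator divides it. *)
Definition SRcomplex (V : finType) (gens : {set {set V}}) : {set {set V}} :=
  [set s : {set V} | [forall g in gens, ~~ (g \subset s)]].

(* Supports of the generators of J(K_n):
   x_ij x_kl (i,j,k,l distinct) and x_ij x_ik x_jk (i,j,k distinct). *)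
Definition JKn_gens (n : nat) : {set {set Kedge n}} :=
  [set g : {set Kedge n} |
     [exists i : 'I_n, exists j : 'I_n, exists k : 'I_n, exists l : 'I_n,
        [&& uniq [:: i; j; k; l] &
            (g == [set e : Kedge n | (val e == [set i; j]) || (val e == [set k; l])])]]
  || [exists i : 'I_n, exists j : 'I_n, exists k : 'I_n,
        [&& uniq [:: i; j; k] &
            (g == [set e : Kedge n | [|| val e == [set i; j], val e == [set i; k]
                                       | val e == [set j; k]]])]]].

Definition DeltaJKn (n : nat) : {set {set Kedge n}} := SRcomplex (JKn_gens n).

Definition facets (V : finType) (D : {set {set V}}) : {set {set V}} :=
  [set F in D | [forall G in D, (F \subset G) ==> (G == F)]].

(* delta = dim + 1 = maximal size of a face *)
Definition cx_delta (V : finType) (D : {set {set V}}) : nat :=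
  \max_(s in D) #|s|.

(* f_{i-1} = number of faces with i vertices *)
Definition fnum (V : finType) (D : {set {set V}}) (i : nat) : nat :=
  #|[set s in D | #|s| == i]|.

Definition face_poly (V : finType) (D : {set {set V}}) : {poly int} :=
  \sum_(i < (cx_delta D).+1) (fnum D i)%:R *: 'X^(cx_delta D - i).

(* Main.v *)
Require Import Defs.
From HB Require Import structures.
From mathcomp Require Import all_boot all_order all_algebra.
Set Implicit Arguments. Unset Strict Implicit. Unset Printing Implicit Defensive.
Import GRing.Theory.

Section K.
Variable n : nat.
Implicit Types (e f g : Kedge n) (s : {set Kedge n}).

Definition star (i : 'I_n) : {set Kedge n} := [set e : Kedge n | i \in val e].

Lemma edge2 e : #|val e| = 2.
Proof. by case: e => E /= /eqP. Qed.

Lemma edge_other e x : x \in val e -> exists y, y != x /\ val e = [set x; y].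
Proof.
move=> xe; have /eqP/cards2P [u [v [uv E]]] := edge2 e.
move: xe; rewrite E !inE => /orP [/eqP->|/eqP->].
  by exists v; rewrite eq_sym.
by exists u; split; [exact: uv | rewrite setUC].
Qed.

Lemma gens_disj s (i j k l : 'I_n) e f : s \in DeltaJKn n -> e \in s -> f \in s ->
  uniq [:: i; j; k; l] -> val e = [set i; j] -> val f = [set k; l] -> False.
Proof.
move=> /[!inE] /forallP H es fs u Ee Ef.
set g := [set x : Kedge n | (val x == [set i; j]) || (val x == [set k; l])].
have : g \in JKn_gens n.
  rewrite inE; apply/orP; left.
  by apply/existsP; exists i; apply/existsP; exists j; apply/existsP; exists k;
     apply/existsP; exists l; rewrite u eqxx.
move=> gG; have := H g; rewrite gG /= => /negP; apply.
apply/subsetP => x; rewrite inE -Ee -Ef => /orP [] /eqP /val_inj -> //.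
Qed.

Lemma gens_tri s (i j k : 'I_n) e f g : s \in DeltaJKn n -> e \in s -> f \in s -> g \in s ->
  uniq [:: i; j; k] -> val e = [set i; j] -> val f = [set i; k] -> val g = [set j; k] -> False.
Proof.
move=> /[!inE] /forallP H es fs gs u Ee Ef Eg.
set h := [set x : Kedge n | [|| val x == [set i; j], val x == [set i; k] | val x == [set j; k]]].
have : h \in JKn_gens n.
  rewrite inE; apply/orP; right.
  by apply/existsP; exists i; apply/existsP; exists j; apply/existsP; exists k;
     rewrite u eqxx.
move=> hG; have := H h; rewrite hG /= => /negP; apply.
apply/subsetP => x; rewrite inE -Ee -Ef -Eg => /or3P [] /eqP /val_inj -> //.
Qed.

Lemma meet s e f : s \in DeltaJKn n -> e \in s -> f \in s ->
  exists x, (x \in val e) && (x \in val f).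
Proof.
move=> sD es fs; case: (boolP [exists x, (x \in val e) && (x \in val f)]) => [/existsP //|/existsPn H].
exfalso.
have /eqP/cards2P [i [j [ij Ee]]] := edge2 e.
have /eqP/cards2P [k [l [kl Ef]]] := edge2 f.
have hk := H k; have hl := H l.
rewrite Ee Ef !inE !eqxx !orbT !andbT in hk hl.
apply: (gens_disj sD es fs _ Ee Ef).
rewrite /= !inE !negb_or ij kl.
move: hk hl; rewrite !negb_or => /andP[ki kj] /andP[li lj].
by rewrite !(eq_sym i) !(eq_sym j) ki kj li lj.
Qed.

Lemma face_star s : (0 < n)%N -> s \in DeltaJKn n -> exists i, s \subset star i.
Proof.
move=> n0 sD.
have [->|[e es]] := set_0Vmem s.
  by exists (Ordinal n0); rewrite sub0set.
have /eqP/cards2P [a [b [ab Ee]]] := edge2 e.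
case: (boolP [forall f in s, a \in val f]) => [/forall_inP Ha|/forall_inPn [f fs afN]].
  by exists a; apply/subsetP => f fs; rewrite inE Ha.
have bf : b \in val f.
  have [x /andP [xe xf]] := meet sD es fs.
  move: xe; rewrite Ee !inE => /orP [/eqP xa|/eqP <- //].
  by rewrite -xa xf in afN.
have [c [cb Ef]] := edge_other bf.
have ca : c != a by apply: contraNneq afN => <-; rewrite Ef !inE eqxx orbT.
exists b; apply/subsetP => g gs; rewrite inE.
apply/negPn/negP => bg.
have ag : a \in val g.
  have [x /andP [xe xg]] := meet sD es gs.
  move: xe; rewrite Ee !inE => /orP [/eqP xa|/eqP xb]; first by rewrite -xa.
  by rewrite -xb xg in bg.
have cg : c \in val g.
  have [x /andP [xf xg]] := meet sD fs gs.
  move: xf; rewrite Ef !inE => /orP [/eqP xb|/eqP xc]; last by rewrite -xc.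
  by rewrite -xb xg in bg.
have [y [ya Eg]] := edge_other ag.
have yc : y = c.
  by move: cg; rewrite Eg !inE (negbTE ca) /= => /eqP.
apply: (gens_tri sD es gs fs (i:=a) (j:=b) (k:=c)).
- by rewrite /= !inE negb_or ab eq_sym ca eq_sym cb.
- exact: Ee.
- by rewrite Eg yc.
- exact: Ef.
Qed.

Lemma mkE_proof (i j : 'I_n) : i != j -> #|[set i; j]| == 2.
Proof. by move=> h; rewrite cards2 h. Qed.

Definition mkE (i j : 'I_n) (h : i != j) : Kedge n :=
  exist (fun E : {set 'I_n} => #|E| == 2) [set i; j] (mkE_proof h).

Lemma mkE_val (i j : 'I_n) (h : i != j) : val (mkE h) = [set i; j].
Proof. by []. Qed.

Ltac kill := match goal with
 | E1 : ?i = ?x, E2 : ?i = ?y, H : is_true (?x != ?y) |- _ => by have := H; rewrite -E1 -E2 eqxx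
 | E1 : ?i = ?x, E2 : ?i = ?y, H : is_true (?y != ?x) |- _ => by have := H; rewrite -E1 -E2 eqxx
 end.

Lemma star_face i s : s \subset star i -> s \in DeltaJKn n.
Proof.
move=> si; rewrite inE; apply/forall_inP => g; rewrite inE => /orP [].
  move=> /existsP [a /existsP [b /existsP [c /existsP [d /andP [u /eqP ->]]]]].
  apply/negP => /subsetP H.
  have u' := u; move: u'; rewrite /= !inE !negb_or => /andP [/and3P [ab ac ad] /andP[/andP [bc bd] /andP [cd _]]].
  have h1 := H (mkE ab); have h2 := H (mkE cd).
  rewrite !inE !eqxx /= ?orbT in h1 h2.
  have := subsetP si _ (h1 isT); have := subsetP si _ (h2 isT).
  rewrite !inE ?mkE_val ?inE.
  by case/orP => /eqP E1; case/orP => /eqP E2; kill.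
move=> /existsP [a /existsP [b /existsP [c /andP [u /eqP ->]]]].
apply/negP => /subsetP H.
have u' := u; move: u'; rewrite /= !inE !negb_or => /andP [/andP [ab ac] /andP[bc _]].
have h1 := H (mkE ab); have h2 := H (mkE ac); have h3 := H (mkE bc).
rewrite !inE !eqxx /= ?orbT in h1 h2 h3.
have := subsetP si _ (h1 isT); have := subsetP si _ (h2 isT); have := subsetP si _ (h3 isT).
rewrite !inE ?mkE_val ?inE.
case/orP => /eqP E1; case/orP => /eqP E2; case/orP => /eqP E3.
all: kill.
Qed.

Lemma faceP s : (0 < n)%N -> reflect (exists i, s \subset star i) (s \in DeltaJKn n).
Proof.
move=> n0; apply: (iffP idP); first exact: face_star.
by case=> i; apply: star_face.
Qed.

Lemma star_sub (i j : 'I_n) : (3 <= n)%N -> star i \subset star j -> i = j.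
Proof.
move=> n3 sij; have [//|ij] := eqVneq i j.
have h := cardsC [set i; j]; rewrite cards2 ij card_ord in h.
have : (0 < #|~: [set i; j]|)%N by rewrite -(ltn_add2l 2) addn0 h.
case/card_gt0P => k; rewrite !inE negb_or => /andP [ki kj].
rewrite eq_sym in ki.
have := subsetP sij (mkE ki); rewrite !inE eqxx /= => /(_ isT).
by rewrite eq_sym (negbTE ij) eq_sym (negbTE kj).
Qed.

Definition other (i : 'I_n) (e : Kedge n) : 'I_n := odflt i [pick x in val e :\ i].

Lemma otherP (i : 'I_n) e : i \in val e -> other i e != i /\ val e = [set i; other i e].
Proof.
move=> ie; have [y [yi E]] := edge_other ie.
suff -> : other i e = y by [].
rewrite /other; case: pickP => [x|].
  by rewrite E !inE => /andP [/negbTE -> /= /eqP].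
by move=> /(_ y); rewrite E !inE yi eqxx orbT.
Qed.

Lemma card_star (i : 'I_n) : #|star i| = n.-1.
Proof.
rewrite -[n in RHS]card_ord -(cardsC1 i).
have -> : [set~ i] = other i @: star i.
  apply/setP => k; apply/idP/idP.
    rewrite !inE eq_sym => ki; apply/imsetP; exists (mkE ki); first by rewrite inE /= !inE eqxx.
    have [oi E] : other i (mkE ki) != i /\ val (mkE ki) = [set i; other i (mkE ki)].
      by apply: otherP; rewrite /= !inE eqxx.
    move: E; rewrite /= => /setP /(_ k); rewrite !inE eqxx orbT eq_sym (negbTE ki) /=.
    by move=> /esym /eqP.
  by case/imsetP => e; rewrite inE => /otherP [oi _] ->; rewrite !inE.
rewrite card_in_imset // => e f; rewrite !inE => /otherP [_ Ee] /otherP [_ Ef] eq.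
by apply: val_inj; rewrite Ee Ef eq.
Qed.

Lemma facetsE : (3 <= n)%N -> facets (DeltaJKn n) = [set star i | i in 'I_n].
Proof.
move=> n3; have n0 : (0 < n)%N by apply: leq_trans n3.
apply/setP => F; rewrite inE; apply/andP/imsetP.
  case=> /(faceP _ n0) [i Fi] /forall_inP /(_ (star i)).
  rewrite (star_face (subxx _)) Fi => /(_ isT) /eqP <-.
  by exists i.
case=> i _ ->; split; first exact: star_face (subxx _).
apply/forall_inP => G /(faceP _ n0) [j Gj]; apply/implyP => iG.
have ij := @star_sub i j n3 (subset_trans iG Gj); subst j.
by rewrite eqEsubset Gj iG.
Qed.

Lemma star_inj : (3 <= n)%N -> injective star.
Proof. by move=> n3 i j E; apply: (@star_sub i j n3); rewrite E subxx. Qed.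

Lemma cx_deltaE : (3 <= n)%N -> cx_delta (DeltaJKn n) = n.-1.
Proof.
move=> n3; have n0 : (0 < n)%N by apply: leq_trans n3.
apply/eqP; rewrite eqn_leq; apply/andP; split.
  apply/bigmax_leqP => s /(faceP _ n0) [i si].
  by rewrite -(card_star i) subset_leq_card.
rewrite -(card_star (Ordinal n0)).
apply: (leq_bigmax_cond (F := fun s => #|s|)); exact: star_face (subxx _).
Qed.

Lemma fnum0 : (0 < n)%N -> fnum (DeltaJKn n) 0 = 1%N.
Proof.
move=> n0; rewrite /fnum; transitivity #|[set (set0 : {set Kedge n})]|; last exact: cards1.
apply: eq_card => s.
rewrite !inE cards_eq0; case: (boolP (s == set0)) => [/eqP ->|]; last by rewrite andbF.
by have := star_face (s := set0) (i := Ordinal n0) (sub0set _); rewrite inE => ->.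
Qed.

Lemma card_Kedge : #|{: Kedge n}| = 'C(n, 2).
Proof.
rewrite card_sig -[n in RHS]card_ord -card_draws; apply: eq_card => E; rewrite !inE.
by [].
Qed.

Lemma fnum1 : fnum (DeltaJKn n) 1 = 'C(n, 2).
Proof.
rewrite -card_Kedge -[#|{: Kedge n}|]bin1 -card_draws /fnum; apply: eq_card => s.
rewrite !inE; case: (boolP (#|s| == 1%N)); last by rewrite andbF.
move=> /cards1P [e ->]; rewrite andbT.
have /eqP/cards2P [a [b [ab Ee]]] := edge2 e.
have := star_face (s := [set e]) (i := a); rewrite inE; apply.
by rewrite sub1set inE Ee !inE eqxx.
Qed.

Lemma center_uniq s (i j : 'I_n) : (1 < #|s|)%N -> s \subset star i -> s \subset star j -> i = j.
Proof.
move=> /card_gt1P [x [y [xs ys xy]]] si sj.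
have [//|ij] := eqVneq i j.
have key z : z \in s -> val z = [set i; j].
  move=> zs; have zi : i \in val z by have := subsetP si z zs; rewrite inE.
  have zj : j \in val z by have := subsetP sj z zs; rewrite inE.
  have [w [wi E]] := edge_other zi.
  by move: zj; rewrite E !inE eq_sym (negbTE ij) /= => /eqP <-.
by move: xy; rewrite (val_inj (etrans (key x xs) (esym (key y ys)))) eqxx.
Qed.

Lemma fnum_big k : (0 < n)%N -> (2 <= k)%N -> fnum (DeltaJKn n) k = (n * 'C(n.-1, k))%N.
Proof.
move=> n0 k2; rewrite /fnum -sum1_card.
set A := [set s in DeltaJKn n | #|s| == k].
transitivity (\sum_(s in A) \sum_(i : 'I_n) ((s \subset star i) : nat))%N.
  apply: eq_bigr => s; rewrite inE => /andP [/(faceP _ n0) [i si] /eqP sk].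
  rewrite (bigD1 i) //= si big1 // => j ji.
  case: (boolP (s \subset star j)) => // sj.
  by move: ji; rewrite (center_uniq _ si sj) ?eqxx // sk.
rewrite exchange_big /= -[n in (n * _)%N]card_ord -sum_nat_const.
apply: eq_bigr => i _.
rewrite -(card_star i) -cards_draws -sum1_card big_mkcond /=.
rewrite [RHS]big_mkcond /=; apply: eq_bigr => s _.
rewrite !inE; case: (boolP (s \subset star i)) => si /=; last by case: ifP.
by have := star_face si; rewrite inE => ->.
Qed.

End K.


Unset Implicit Arguments.
Local Open Scope ring_scope.

Theorem lemma4p2 (n : nat) (hn : (3 <= n)%N) :
  let D := DeltaJKn n in
  [/\ #|facets D| = n,
      (forall F, F \in facets D -> #|F| = n.-1),
      (forall F, F \in facets D ->
         #|F :&: \bigcup_(G in facets D | G != F) G| = n.-1) &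
      face_poly D =
        'X^(n.-1)
        + n%:R * (\sum_(1 <= k < n) ('C(n.-1, k))%:R *: 'X^(n.-1 - k))
        - ('C(n, 2))%:R *: 'X^(n - 2)].
Proof.
move=> D; have n0 : (0 < n)%N by apply: leq_trans hn.
split.
- by rewrite /D facetsE // card_imset ?card_ord //; exact: star_inj.
- by move=> F; rewrite /D facetsE // => /imsetP [i _ ->]; rewrite card_star.
- move=> F; rewrite /D facetsE // => /imsetP [i _ ->].
  suff H : star i \subset \bigcup_(G in [set star i0 | i0 in 'I_n] | G != star i) G.
    by rewrite (setIidPl H) card_star.
  apply/subsetP => e ei.
  have ie : i \in val e by move: ei; rewrite inE.
  have [oi E] := otherP ie.
  apply/bigcupP; exists (star (other i e)).
    rewrite imset_f //=; apply: contra oi => /eqP E'.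
    by rewrite (star_inj hn E').
  by rewrite inE E !inE eqxx orbT.
rewrite /face_poly /D cx_deltaE //.
clear D; case: n hn n0 => [|[|[|p]]] // _ _ /=.
rewrite 2!big_ord_recl /= fnum0 // fnum1 /bump /=.
under eq_bigr do rewrite add1n add1n fnum_big // natrM.
rewrite subn0 scale1r subn1 /=.
rewrite big_ltn // big_add1 /= big_add1 /= big_mkord.
under eq_bigr do rewrite -scalerA.
rewrite -scaler_sumr scaler_nat mulr_natl bin1.
have h : ('C(p.+3, 2) * 2 = p.+2 * p.+3)%N.
  by rewrite -[2%N]/(2`!) bin_ffact ffactnS ffactn1 mulnC.
rewrite subn1 /= !scaler_nat mulrnDl -mulrnA -h mulrnA mulr2n.
generalize (\sum_(i < p.+1) 'C(p.+2, i.+2)%:R *: ('X^(p.+2 - i.+2) : {poly int})) => S.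
set A := 'X^(p.+1) *+ _; set B := (\sum_(i < _) _) *+ _.
have E (V : zmodType) (x a b : V) : x + (a + b) = x + (a + a + b) - a.
  by rewrite -[a + a + b]addrA [in RHS]addrCA [RHS]addrC addKr.
exact: E.
Qed.
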